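(* For each $n$ let $m=m_n$ be the order of some element of $S_n$, and assume $m_n$ has a divisor $d_n$ with $3\leq d_n$ and $d_n=o(n^{1/2})$. Then there are functions $a(n)=o(n^{1/2})$ and $b(n)=o(n)$ such that the proportion of elements of order $m_n$ in $S_n$ having at most $a(n)$ fixed points and at most $b(n)$ $2$-cycles tends to $1$ as $n\to\infty$.
   Context: Asymptotic notation is with respect to $n\to\infty$. *)

(* Defs.v *)
From HB Require Import structures.
From mathcomp Require Import all_boot all_order all_algebra all_fingroup.
From mathcomp Require Import reals.
Set Implicit Arguments. Unset Strict Implicit. Unset Printing Implicit Defensive.
Import Order.TTheory GRing.Theory Num.Theory.
Local Open Scope ring_scope.

Definition nfix (n : nat) (s : 'S_n) : nat := #|[set x | s x == x]|.

Definition ntwocycles (n : nat) (s : 'S_n) : nat :=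
  #|[set c in porbits s | #|c| == 2]|.

Definition littleo (R : realType) (f g : nat -> R) : Prop :=
  forall eps : R, 0 < eps -> exists N : nat, forall n : nat, (N <= n)%N ->
    `|f n| <= eps * `|g n|.

Definition tends_to (R : realType) (u : nat -> R) (l : R) : Prop :=
  forall eps : R, 0 < eps -> exists N : nat, forall n : nat, (N <= n)%N ->
    `|u n - l| <= eps.

Definition prop_good (R : realType) (n m : nat) (a b : R) : R :=
  (#|[set s : 'S_n | (#[s]%g == m) && ((nfix s)%:R <= a) && ((ntwocycles s)%:R <= b)]|%:R)
  / (#|[set s : 'S_n | #[s]%g == m]|%:R).

(* Main.v *)
Require Import Defs.
From HB Require Import structures.
From mathcomp Require Import all_boot all_order all_algebra all_fingroup.
From mathcomp Require Import reals.
Import Order.TTheory GRing.Theory Num.Theory.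

From mathcomp Require Import cyclic zify ring lra.
Import Order.TTheory GRing.Theory Num.Theory.
Set Implicit Arguments. Unset Strict Implicit. Unset Printing Implicit Defensive.

Section Cyc.
Variables (n d : nat) (x y : {ffun 'I_d -> 'I_n}).

Definition cfun (z : 'I_n) : 'I_n :=
  if [pick i | x i == z] is Some i then x (ordS i)
  else if [pick i | y i == z] is Some i then y (ordS i) else z.
Definition cinv (z : 'I_n) : 'I_n :=
  if [pick i | x i == z] is Some i then x (ord_pred i)
  else if [pick i | y i == z] is Some i then y (ord_pred i) else z.

Hypothesis xinj : injective x.
Hypothesis yinj : injective y.
Hypothesis hxy : (forall i, y i = x i) \/ (forall i j, y i <> x j).

Lemma cf_x i : cfun (x i) = x (ordS i).
Proof.
rewrite /cfun; case: pickP => [j /eqP/xinj -> //|/(_ i)]; by rewrite eqxx.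
Qed.
Lemma ci_x i : cinv (x i) = x (ord_pred i).
Proof.
rewrite /cinv; case: pickP => [j /eqP/xinj -> //|/(_ i)]; by rewrite eqxx.
Qed.
Lemma cf_y i : cfun (y i) = y (ordS i).
Proof.
rewrite /cfun; case: pickP => [j /eqP hj|_].
  case: hxy => h; last by case: (h i j).
  by move: hj; rewrite -h => /yinj ->; rewrite h.
case: pickP => [j /eqP/yinj -> //|/(_ i)]; by rewrite eqxx.
Qed.
Lemma ci_y i : cinv (y i) = y (ord_pred i).
Proof.
rewrite /cinv; case: pickP => [j /eqP hj|_].
  case: hxy => h; last by case: (h i j).
  by move: hj; rewrite -h => /yinj ->; rewrite h.
case: pickP => [j /eqP/yinj -> //|/(_ i)]; by rewrite eqxx.
Qed.
Lemma cf_o z : (forall i, x i != z) -> (forall i, y i != z) -> cfun z = z.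
Proof.
move=> h1 h2; rewrite /cfun; case: pickP => [j|_]; first by rewrite (negbTE (h1 j)).
by case: pickP => [j|_]; first by rewrite (negbTE (h2 j)).
Qed.
Lemma ci_o z : (forall i, x i != z) -> (forall i, y i != z) -> cinv z = z.
Proof.
move=> h1 h2; rewrite /cinv; case: pickP => [j|_]; first by rewrite (negbTE (h1 j)).
by case: pickP => [j|_]; first by rewrite (negbTE (h2 j)).
Qed.

Lemma cases3 z : [\/ exists i, z = x i, exists i, z = y i |
   (forall i, x i != z) /\ (forall i, y i != z)].
Proof.
case: (pickP (fun i => x i == z)) => [i /eqP <-|h1]; first by constructor 1; exists i.
case: (pickP (fun i => y i == z)) => [i /eqP <-|h2]; first by constructor 2; exists i.
by constructor 3; split=> i; rewrite ?h1 ?h2.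
Qed.

Lemma cfK : cancel cfun cinv.
Proof.
move=> z; case: (cases3 z) => [[i ->]|[i ->]|[h1 h2]].
- by rewrite cf_x ci_x ordSK.
- by rewrite cf_y ci_y ordSK.
- by rewrite cf_o // ci_o.
Qed.

Definition cperm : 'S_n := perm (can_inj cfK).
Lemma cperm_x i : cperm (x i) = x (ordS i). Proof. by rewrite permE cf_x. Qed.
Lemma cperm_y i : cperm (y i) = y (ordS i). Proof. by rewrite permE cf_y. Qed.
Lemma cperm_o z : (forall i, x i != z) -> (forall i, y i != z) -> cperm z = z.
Proof. by move=> h1 h2; rewrite permE cf_o. Qed.

Lemma iter_ordS k (i : 'I_d) : val (iter k (@ordS d) i) = (i + k) %% d.
Proof.
elim: k => [|k IH] /=; first by rewrite addn0 modn_small.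
by rewrite IH addnS -addn1 modnDml addn1.
Qed.

Lemma iter_ordS_d (i : 'I_d) : iter d (@ordS d) i = i.
Proof. by apply: val_inj; rewrite iter_ordS modnDr modn_small. Qed.

Lemma cpermX_x k i : (cperm ^+ k)%g (x i) = x (iter k (@ordS d) i).
Proof. by rewrite permX; elim: k => //= k ->; rewrite cperm_x. Qed.
Lemma cpermX_y k i : (cperm ^+ k)%g (y i) = y (iter k (@ordS d) i).
Proof. by rewrite permX; elim: k => //= k ->; rewrite cperm_y. Qed.

Lemma cperm_d : (cperm ^+ d)%g = 1%g.
Proof.
apply/permP=> z; rewrite perm1; case: (cases3 z) => [[i ->]|[i ->]|[h1 h2]].
- by rewrite cpermX_x iter_ordS_d.
- by rewrite cpermX_y iter_ordS_d.
- by rewrite permX; elim: d => //= k ->; rewrite cperm_o.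
Qed.

End Cyc.

Lemma order_keep n (s c : 'S_n) : commute s c -> (c ^+ #[s])%g = 1%g ->
  (forall k, (forall z, c z = z -> (s ^+ k)%g z = z) -> (s ^+ k)%g = 1%g) ->
  #[(s * c)%g]%g = #[s]%g.
Proof.
move=> hc hcs hk; apply/eqP; rewrite eqn_dvd; apply/andP; split.
  by rewrite order_dvdn expgMn // expg_order hcs mulg1.
have e := expg_order (s * c)%g.
rewrite order_dvdn; apply/eqP/hk => z hz.
have hz' : (c ^+ #[(s * c)%g])%g z = z by rewrite permX; elim: #[_]%g => //= k ->.
have := congr1 (fun p : 'S_n => p z) e.
by rewrite -(commute_sym hc) expgMn ?(commute_sym hc) // permM hz' perm1.
Qed.

Definition sx n d (s : 'S_n) (x : {ffun 'I_d -> 'I_n}) : {ffun 'I_d -> 'I_n} :=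
  [ffun i => s (x i)].

Definition cT n d (x y : {ffun 'I_d -> 'I_n}) : 'S_n :=
  odflt 1%g [pick p : 'S_n | [forall z, p z == cfun x y z]].

Lemma cT_E n d (x y : {ffun 'I_d -> 'I_n}) :
  (exists p : 'S_n, forall z, p z = cfun x y z) -> forall z, cT x y z = cfun x y z.
Proof.
case=> p hp z; rewrite /cT; case: pickP => [q /forallP/(_ z)/eqP //|/(_ p)].
by move/negP; case; apply/forallP => w; rewrite hp.
Qed.

Lemma cT_cperm n d (x : {ffun 'I_d -> 'I_n}) s xinj yinj hxy :
  cT x (sx s x) = cperm (x:=x) (y:=sx s x) xinj yinj hxy.
Proof.
apply/permP => z; rewrite cT_E ?permE //.
by exists (cperm xinj yinj hxy) => w; rewrite permE.
Qed.

Section Switch.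
Variables (n d : nat) (s : 'S_n) (x : {ffun 'I_d -> 'I_n}).
Hypothesis xinj : injective x.
Hypothesis hs2 : forall i, s (s (x i)) = x i.
Hypothesis hxy : (forall i, s (x i) = x i) \/ (forall i j, s (x i) <> x j).

Let y := sx s x.
Lemma yinj : injective y.
Proof. by move=> i j; rewrite /y /sx !ffunE => /perm_inj/xinj. Qed.
Lemma hxy' : (forall i, y i = x i) \/ (forall i j, y i <> x j).
Proof. by case: hxy => h; [left => i|right => i j]; rewrite /y /sx ffunE; apply: h. Qed.

Let c := cperm xinj yinj hxy'.

Lemma c_x i : c (x i) = x (ordS i). Proof. exact: cperm_x. Qed.
Lemma c_y i : c (s (x i)) = s (x (ordS i)).
Proof. have := cperm_y xinj yinj hxy' i; by rewrite /y /sx !ffunE. Qed.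
Lemma c_o z : (forall i, x i != z) -> (forall i, s (x i) != z) -> c z = z.
Proof. move=> h1 h2; apply: cperm_o => // i; by rewrite /y /sx ffunE. Qed.

Lemma c_comm : commute s c.
Proof.
apply/permP=> z; rewrite !permM.
case: (cases3 x y z) => [[i ->]|[i ->]|[h1 h2]].
- by rewrite c_x c_y.
- rewrite /y /sx ffunE hs2 c_x c_y hs2 //.
- have h2' : forall i, s (x i) != z by move=> i; have := h2 i; rewrite /y /sx ffunE.
  rewrite (c_o h1 h2') c_o //.
    move=> i; apply/negP => /eqP e; move/negP: (h2' i); apply; apply/eqP.
    by apply: (@perm_inj _ s); rewrite hs2.
  by move=> i; apply/negP => /eqP e; move/negP: (h1 i); apply; apply/eqP; apply: (@perm_inj _ s).
Qed.



Lemma t_x i : (s * c)%g (x i) = s (x (ordS i)).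
Proof. by rewrite permM c_y. Qed.
Lemma t_y i : (s * c)%g (s (x i)) = x (ordS i).
Proof. by rewrite permM hs2 c_x. Qed.

Hypothesis hkeep : forall k, (forall z, (forall i, x i != z) -> (forall i, s (x i) != z) ->
   (s ^+ k)%g z = z) -> forall i, (s ^+ k)%g (x i) = x i.

Lemma order_sc : d %| #[s]%g -> #[(s * c)%g]%g = #[s]%g.
Proof.
move=> dvd; apply: order_keep; first exact: c_comm.
  case/dvdnP: dvd => j ->; rewrite mulnC expgM.
  have -> : (c ^+ d)%g = 1%g by apply: cperm_d.
  by rewrite expg1n.
move=> k hk; apply/permP => z; rewrite perm1.
have hk' : forall i, (s ^+ k)%g (x i) = x i.
  by apply: hkeep => w h1 h2; apply: hk; apply: c_o.
case: (cases3 x y z) => [[i ->]|[i ->]|[h1 h2]].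
- exact: hk'.
- rewrite /y /sx ffunE -permM (commuteX k (commute_refl s)) permM hk' //.
- apply: hk; apply: c_o => // i; have := h2 i; by rewrite /y /sx ffunE.
Qed.
Lemma cT_c : cT x (sx s x) = c. Proof. exact: cT_cperm. Qed.
Lemma tT_x i : (s * cT x (sx s x))%g (x i) = s (x (ordS i)).
Proof. by rewrite cT_c t_x. Qed.
Lemma tT_y i : (s * cT x (sx s x))%g (s (x i)) = x (ordS i).
Proof. by rewrite cT_c t_y. Qed.
Lemma order_scT : d %| #[s]%g -> #[(s * cT x (sx s x))%g]%g = #[s]%g.
Proof. by rewrite cT_c; apply: order_sc. Qed.
End Switch.




Lemma ffact_mono a b k : a <= b -> a ^_ k <= b ^_ k.
Proof. by move=> ab; rewrite !ffact_prod; apply: leq_prod => i _; apply: leq_sub2r. Qed.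

Section Count.
Variables (n d m : nat) (i0 : 'I_d) (A : 'S_n -> {set 'I_n}) (P : {set 'I_n * 'I_n}).
Hypothesis dm : d %| m.
Hypothesis H : forall (s : 'S_n) (x : {ffun 'I_d -> 'I_n}), #[s]%g = m -> injective x ->
  (forall i, x i \in A s) ->
  [/\ (x i0, s (x i0)) \in P, (forall i, s (s (x i)) = x i),
      ((forall i, s (x i) = x i) \/ (forall i j, s (x i) <> x j)) &
      forall k, (forall z, (forall i, x i != z) -> (forall i, s (x i) != z) ->
          (s ^+ k)%g z = z) -> forall i, (s ^+ k)%g (x i) = x i].

Let D := [set p : 'S_n * {ffun 'I_d -> 'I_n} |
   [&& #[p.1]%g == m, p.2 \in ffun_on (A p.1) & injectiveb p.2]].
Let psi (p : 'S_n * {ffun 'I_d -> 'I_n}) :=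
  ((p.1 * cT p.2 (sx p.1 p.2))%g, (p.2 i0, p.1 (p.2 i0))).
Let O := [set s : 'S_n | #[s]%g == m].

Lemma inD p : p \in D -> [/\ #[p.1]%g = m, injective p.2 & forall i, p.2 i \in A p.1].
Proof.
rewrite inE => /and3P[/eqP h1 /ffun_onP h2 /injectiveP h3]; split => //.
Qed.

Lemma psi_sub : psi @: D \subset setX O P.
Proof.
apply/subsetP => _ /imsetP[[s x] /inD[/= hm hinj hA] ->].
have [hP hs2 hxy hk] := H hm hinj hA.
rewrite !inE /= hP andbT.
by rewrite (order_scT hinj hs2 hxy) // hm.
Qed.

Lemma psi_inj : {in D &, injective psi}.
Proof.
move=> [s x] [s' x'] /inD[/= hm hinj hA] /inD[/= hm' hinj' hA'].
have [hP hs2 hxy hk] := H hm hinj hA.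
have [hP' hs2' hxy' hk'] := H hm' hinj' hA'.
rewrite /psi /=.
case=> et e0 e1.
have rec : forall k, x (iter k (@ordS d) i0) = x' (iter k (@ordS d) i0) /\
    s (x (iter k (@ordS d) i0)) = s' (x' (iter k (@ordS d) i0)).
  elim=> [|k [IH1 IH2]] //=.
  split.
    by rewrite -(tT_y hinj hs2 hxy) et IH2 (tT_y hinj' hs2' hxy').
  by rewrite -(tT_x hinj hxy) et IH1 (tT_x hinj' hxy').
have hall : forall i : 'I_d, i = iter (i + (d - i0)) (@ordS d) i0.
  move=> i; apply: val_inj; rewrite iter_ordS addnCA subnKC ?(ltnW (ltn_ord i0)) //.
  by rewrite modnDr modn_small.
have ex : x = x' by apply/ffunP => i; rewrite (hall i); case: (rec (i + (d - i0))).
subst x'.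
have esx : sx s x = sx s' x.
  by apply/ffunP => i; rewrite !ffunE (hall i); case: (rec (i + (d - i0))).
move: et; rewrite esx => /mulIg ->.
by [].
Qed.

Lemma count_main F : #|[set s : 'S_n | (#[s]%g == m) && (F <= #|A s|)]| * F ^_ d
   <= #|O| * #|P|.
Proof.
rewrite -cardsX; apply: leq_trans (subset_leq_card psi_sub).
rewrite card_in_imset; last exact: psi_inj.
have eD : #|D| = \sum_(s in O) #|[set p in D | p.1 == s]|.
  rewrite -sum1_card (partition_big (fun p => p.1) (mem O)); last first.
    by move=> [s x] /inD[/= hm _ _]; rewrite inE hm.
  by apply: eq_bigr => s _; rewrite -sum1_card; apply: eq_bigl => p; rewrite inE.
rewrite eD -sum_nat_const.
apply: leq_trans (_ : \sum_(s in O | F <= #|A s|) #|[set p in D | p.1 == s]| <= _); last first.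
  by rewrite [X in _ <= X](bigID (fun s => F <= #|A s|)) /= leq_addr.
rewrite [X in X <= _](eq_bigl (fun s => (s \in O) && (F <= #|A s|))); last first.
  by move=> s; rewrite !inE.
apply: leq_sum => s /andP[hO hF].
apply: leq_trans (ffact_mono d hF) _.
rewrite -[in X in X <= _](card_ord d) -card_inj_ffuns_on.
rewrite -(card_imset _ (fun x y (e : (s, x) = (s, y)) => congr1 snd e)).
apply: subset_leq_card; apply/subsetP => _ /imsetP[x hx ->].
move: hx hO; rewrite !inE /= eqxx andbT => /andP[h1 h2] ->.
by rewrite h1 h2.
Qed.
End Count.

Lemma fix_bound n d m (i0 : 'I_d) F : d %| m ->
  #|[set s : 'S_n | (#[s]%g == m) && (F <= nfix s)]| * F ^_ d
   <= #|[set s : 'S_n | #[s]%g == m]| * n.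
Proof.
move=> dm.
pose A1 := fun s : 'S_n => [set y | s y == y].
pose P1 := [set p : 'I_n * 'I_n | p.1 == p.2].
have hP : #|P1| <= n.
  rewrite -[n in _ <= n]card_ord -(card_imset (mem 'I_n) (fun y y' (e : (y, y) = (y', y')) => congr1 fst e)).
  apply: subset_leq_card; apply/subsetP => [[y y']]; rewrite inE /= => /eqP <-.
  by apply/imsetP; exists y.
apply: leq_trans (leq_mul (leqnn _) hP).
have := @count_main n d m i0 A1 P1 dm.
have H : forall (s : {perm 'I_n}) (x : {ffun 'I_d -> 'I_n}),
  #[s]%g = m -> injective x -> (forall i, x i \in A1 s) ->
  [/\ (x i0, s (x i0)) \in P1, (forall i, s (s (x i)) = x i),
      ((forall i, s (x i) = x i) \/ (forall i j, s (x i) <> x j)) &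
      forall k, (forall z, (forall i, x i != z) -> (forall i, s (x i) != z) ->
          (s ^+ k)%g z = z) -> forall i, (s ^+ k)%g (x i) = x i].
  move=> s x _ _ hA.
  have hf : forall i, s (x i) = x i by move=> i; have := hA i; rewrite inE => /eqP.
  split => //.
  - by rewrite inE /= hf.
  - by move=> i; rewrite !hf.
  - by left.
  - by move=> k _ i; rewrite permX; elim: k => //= k ->; rewrite hf.
by move=> /(_ H F).
Qed.

Lemma iter2 n (s : 'S_n) w k : s (s w) = w -> (s ^+ k)%g w = if odd k then s w else w.
Proof.
move=> h; rewrite permX; elim: k => //= k ->.
by case: (odd k) => //=.
Qed.

Definition R2 n (s : 'S_n) := [set y | [&& s y != y, s (s y) == y & (y < s y)%N]].
Definition A2 n (s : 'S_n) := [set y in R2 s | [exists z in R2 s, (z < y)%N]].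

Lemma ntwo_R2 n (s : 'S_n) : ntwocycles s <= #|R2 s|.
Proof.
rewrite /ntwocycles.
apply: leq_trans (leq_imset_card (porbit s) (mem (R2 s))).
apply: subset_leq_card; apply/subsetP => C; rewrite inE => /andP[/imsetP[y _ ->] /eqP h2].
have hss : s (s y) = y by have := iter_porbit s y; rewrite h2.
have hsy : s y != y.
  apply/eqP => e; move: h2.
  have -> : porbit s y = [set y].
    apply/setP => z; rewrite inE; apply/porbitP/eqP => [[i ->]|->].
      by rewrite permX; elim: i => //= i ->.
    by exists 0; rewrite expg0 perm1.
  by rewrite cards1.
case: (ltngtP y (s y)) => [lt|gt|eq].
- by apply/imsetP; exists y => //; rewrite !inE hsy hss eqxx lt.
- apply/imsetP; exists (s y).
    by rewrite !inE hss eq_sym hsy eqxx gt.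
  by have := porbit_perm s 1 y; rewrite expg1 => ->.
- by move/eqP: hsy; case; apply: val_inj.
Qed.

Lemma R2_A2 n (s : 'S_n) : #|R2 s| <= #|A2 s| + 1.
Proof.
rewrite -(cardsID (A2 s) (R2 s)); apply: leq_add.
  by apply: subset_leq_card; apply: subsetIr.
apply/card_le1_eqP => y y'; rewrite !inE.
move=> /andP[/negP hy hRy] /andP[/negP hy' hRy'].
apply: val_inj; apply/eqP; rewrite eqn_leq; apply/andP; split; rewrite leqNgt.
  by apply/negP => lt; apply: hy'; rewrite hRy' /=; apply/existsP; exists y; rewrite !inE hRy lt.
by apply/negP => lt; apply: hy; rewrite hRy /=; apply/existsP; exists y'; rewrite !inE hRy' lt.
Qed.

Lemma two_bound n d m (i0 : 'I_d) F : d %| m ->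
  #|[set s : 'S_n | (#[s]%g == m) && (F.+1 <= ntwocycles s)]| * F ^_ d
   <= #|[set s : 'S_n | #[s]%g == m]| * (n * n).
Proof.
move=> dm.
pose P2 := [set: 'I_n * 'I_n].
have hP : #|P2| = n * n by rewrite cardsT card_prod card_ord.
rewrite -hP.
apply: leq_trans (_ : #|[set s : 'S_n | (#[s]%g == m) && (F <= #|A2 s|)]| * F ^_ d <= _).
  rewrite leq_mul2r; apply/orP; right; apply: subset_leq_card; apply/subsetP => s.
  rewrite !inE => /andP[-> h] /=.
  by rewrite -(leq_add2r 1) addn1; apply: leq_trans h (leq_trans (ntwo_R2 s) (R2_A2 s)).
have := @count_main n d m i0 (@A2 n) P2 dm.
have H : forall (s : {perm 'I_n}) (x : {ffun 'I_d -> 'I_n}),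
  #[s]%g = m -> injective x -> (forall i, x i \in A2 s) ->
  [/\ (x i0, s (x i0)) \in P2, (forall i, s (s (x i)) = x i),
      ((forall i, s (x i) = x i) \/ (forall i j, s (x i) <> x j)) &
      forall k, (forall z, (forall i, x i != z) -> (forall i, s (x i) != z) ->
          (s ^+ k)%g z = z) -> forall i, (s ^+ k)%g (x i) = x i].
  move=> s x _ _ hA.
  have hR : forall i, [&& s (x i) != x i, s (s (x i)) == x i & (x i < s (x i))%N].
    by move=> i; have := hA i; rewrite !inE => /andP[].
  have hss : forall i, s (s (x i)) = x i by move=> i; case/and3P: (hR i) => _ /eqP.
  split => //.
  - by rewrite inE.
  - right => i j e.
    case/and3P: (hR i) => _ _ l1; case/and3P: (hR j) => _ _ l2.
    move: l2; rewrite -e hss => l2.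
    by move: (ltn_trans l1 l2); rewrite ltnn.
  - move=> k hk i.
    have hx0 : x i0 \in R2 s by have := hA i0; rewrite inE => /andP[].
    case: (arg_minnP (fun z : 'I_n => nat_of_ord z) hx0) => z0 hz0 hmin.
    have hz0' : z0 \in R2 s by []. move: (hz0'); rewrite inE => /and3P[hz1 /eqP hz2 hz3].
    have ez0 : (s ^+ k)%g z0 = z0.
      apply: hk => j; apply/eqP => e.
        have := hA j; rewrite inE => /andP[_ /existsP[z /andP[hz lt]]].
        by move: (hmin z hz); rewrite -e leqNgt lt.
      case/and3P: (hR j) => _ _ l1.
      move: hz3; rewrite -e hss => l2.
      by move: (ltn_trans l1 l2); rewrite ltnn.
    move: ez0; rewrite (iter2 k hz2) (iter2 k (hss i)).
    by case: (odd k) => // e; move/eqP: hz1.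
by move=> /(_ H F).
Qed.

Definition qq n := \max_(i < n.+1 | i ^ 8 <= n) (i : nat).

Lemma qq8 n : qq n ^ 8 <= n.
Proof.
rewrite /qq; apply: (big_ind (fun x => x ^ 8 <= n)) => //.
  by move=> a b ha hb; rewrite /maxn; case: ifP.
Qed.

Lemma qqge n K : K ^ 8 <= n -> K <= qq n.
Proof.
move=> h.
have hK : K < n.+1.
  rewrite ltnS; case: K h => // K h; apply: leq_trans h.
  by rewrite -{1}(expn1 K.+1) leq_pexp2l.
exact: (@leq_bigmax_cond _ (fun i : 'I_n.+1 => i ^ 8 <= n) (fun i : 'I_n.+1 => (i : nat)) (Ordinal hK)).
Qed.

Lemma qqlt n : n < (qq n).+1 ^ 8.
Proof. by rewrite ltnNge; apply/negP => /qqge; rewrite ltnn. Qed.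

Lemma qq_n n : 1 <= qq n -> n <= 2 ^ 8 * qq n ^ 8.
Proof.
move=> h; apply: ltnW; apply: leq_trans (qqlt n) _.
by rewrite -expnMn leq_exp2r // mul2n -addnn -addn1 leq_add2l.
Qed.

Lemma ffact3_le F k : 3 <= k -> k <= F -> F ^_ 3 <= F ^_ k.
Proof.
move=> h3; elim: k h3 => [//|k IH] h3 hk.
case: (leqP 3 k) => h.
  rewrite [F ^_ k.+1]ffactnSr; apply: leq_trans (IH h (ltnW hk)) _.
  by rewrite leq_pmulr // subn_gt0.
have -> : k.+1 = 3 by apply/eqP; rewrite eqn_leq h3 andbT.
by [].
Qed.

Lemma ffact3 F : F ^_ 3 = F * (F - 1) * (F - 2).
Proof. by rewrite !ffactnSr ffactn0 mul1n subn0. Qed.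

Lemma key n d m (hd3 : 3 <= d) (dm : d %| m) (hq : 1 <= qq n) :
  (#|[set s : 'S_n | #[s]%g == m]| -
   #|[set s : 'S_n | (#[s]%g == m) && (nfix s <= d + qq n ^ 3) &&
        (ntwocycles s <= d + qq n ^ 7 + 1)]|) * qq n
   <= (2 ^ 8 + 2 ^ 8 * 2 ^ 8) * #|[set s : 'S_n | #[s]%g == m]|.
Proof.
set q := qq n.
set O := [set s : 'S_n | #[s]%g == m].
set G := [set s : 'S_n | _ && _ && _].
set BA := [set s : 'S_n | (#[s]%g == m) && ((d + q ^ 3).+1 <= nfix s)].
set BB := [set s : 'S_n | (#[s]%g == m) && ((d + q ^ 7 + 1).+1 <= ntwocycles s)].
have i0 : 'I_d by exists 0; apply: leq_trans hd3.
have q8 : 0 < q ^ 8 by rewrite expn_gt0 hq.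
have hn := qq_n hq.
have hA : #|BA| * q <= 2 ^ 8 * #|O|.
  rewrite -(leq_pmul2r q8).
  have h1 := fix_bound n i0 (d + q ^ 3).+1 dm.
  apply: (@leq_trans (#|BA| * (d + q ^ 3).+1 ^_ d)).
    rewrite -mulnA leq_mul2l; apply/orP; right.
    apply: leq_trans (ffact3_le _ _) => //; last by lia.
    have -> : q * q ^ 8 = q ^ 3 * q ^ 3 * q ^ 3 by rewrite -!expnD -expnS.
    rewrite ffact3; repeat apply: leq_mul; lia.
  apply: leq_trans h1 _.
  apply: leq_trans (leq_mul (leqnn _) hn) _.
  by rewrite -/O -/q mulnCA mulnA.
have hB : #|BB| * q <= (2 ^ 8 * 2 ^ 8) * #|O|.
  have q20 : 0 < q ^ 20 by rewrite expn_gt0 hq.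
  rewrite -(leq_pmul2r q20).
  have h1 := two_bound n i0 (d + q ^ 7 + 1) dm.
  apply: (@leq_trans (#|BB| * (d + q ^ 7 + 1) ^_ d)).
    rewrite -mulnA leq_mul2l; apply/orP; right.
    apply: leq_trans (ffact3_le _ _) => //; last by lia.
    have -> : q * q ^ 20 = q ^ 7 * q ^ 7 * q ^ 7 by rewrite -!expnD -expnS.
    rewrite ffact3; repeat apply: leq_mul; lia.
  apply: leq_trans h1 _.
  have hnn : n * n <= (2 ^ 8 * 2 ^ 8) * q ^ 16.
    have -> : (2 ^ 8 * 2 ^ 8) * q ^ 16 = (2 ^ 8 * q ^ 8) * (2 ^ 8 * q ^ 8).
      by rewrite mulnACA (expnD q 8 8).
    by apply: leq_mul; rewrite -/q in hn.
  apply: leq_trans (leq_mul (leqnn _) hnn) _.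
  rewrite -/O mulnCA mulnA leq_mul2l; apply/orP; right.
  by rewrite leq_pexp2l.
have cu : forall A B : {set 'S_n}, #|A :|: B| <= #|A| + #|B|.
  by move=> A B; rewrite -cardsUI leq_addr.
have hO : #|O| <= #|G| + #|BA| + #|BB|.
  apply: leq_trans (_ : #|G :|: BA :|: BB| <= _); last first.
    by apply: leq_trans (cu _ _) _; rewrite leq_add2r cu.
  apply: subset_leq_card; apply/subsetP => s; rewrite !inE => hs.
  rewrite hs /=; case: leqP => //= _; case: leqP => //=.
rewrite mulnBl leq_subLR.
apply: (@leq_trans ((#|G| + #|BA| + #|BB|) * q)); first by rewrite leq_mul2r hO orbT.
rewrite -addnA mulnDl leq_add2l mulnDl; apply: leq_trans (leq_add hA hB) _.
rewrite -mulnDl; exact: leqnn.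
Qed.

Local Open Scope ring_scope.

Lemma L1 (R : realType) (q n : nat) (e : R) : 0 < e -> 1 <= q%:R * e -> (q ^ 8 <= n)%N ->
  (q ^ 3)%:R <= e * Num.sqrt (n%:R : R).
Proof.
move=> he hq h8.
have h8' : (q%:R : R) ^+ 8 <= n%:R by rewrite -natrX ler_nat.
have hQ : (0 : R) <= q%:R by [].
have he' : 0 <= e by apply: ltW.
rewrite natrX -(ler_pXn2r (_ : (0 < 2)%N)) ?nnegrE ?exprn_ge0 ?mulr_ge0 ?sqrtr_ge0 //.
rewrite [X in _ <= X]exprMn sqr_sqrtr // -exprM.
have h1 : (1 : R) <= (q%:R * e) ^+ 2 by apply: exprn_ege1.
apply: le_trans (_ : (q%:R : R) ^+ 6 * (q%:R * e) ^+ 2 <= _).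
  by rewrite ler_peMr // exprn_ge0.
have -> : (q%:R : R) ^+ 6 * (q%:R * e) ^+ 2 = e ^+ 2 * q%:R ^+ 8 by ring.
by rewrite ler_wpM2l // exprn_ge0.
Qed.

Lemma L2 (R : realType) (q n : nat) (e : R) : 0 < e -> 1 <= q%:R * e -> (q ^ 8 <= n)%N ->
  (q ^ 7)%:R <= e * (n%:R : R).
Proof.
move=> he hq h8.
have h8' : (q%:R : R) ^+ 8 <= n%:R by rewrite -natrX ler_nat.
rewrite natrX.
apply: le_trans (_ : (q%:R : R) ^+ 7 * (q%:R * e) <= _).
  by rewrite ler_peMr // exprn_ge0.
have -> : (q%:R : R) ^+ 7 * (q%:R * e) = e * q%:R ^+ 8 by ring.
by rewrite ler_wpM2l // ltW.
Qed.

Lemma L3 (R : realType) (n : nat) : (1 <= n)%N -> Num.sqrt (n%:R : R) <= n%:R.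
Proof.
move=> h.
have h1 : (1 : R) <= n%:R by rewrite ler1n.
have hs : 1 <= Num.sqrt (n%:R : R) by rewrite -[X in X <= _]sqrtr1 ler_sqrt.
have h0 : (0 : R) <= n%:R by [].
rewrite -{2}(sqr_sqrtr h0) expr2 ler_peMl //; exact: le_trans ler01 hs.
Qed.

Lemma Lq (R : realType) (e : R) (q K : nat) : 0 < e -> 1 / e < K%:R -> (K <= q)%N ->
  1 <= q%:R * e.
Proof.
move=> he hK hq.
rewrite -ler_pdivrMr //; apply: le_trans (ltW hK) _; by rewrite ler_nat.
Qed.

Lemma Kpos (R : realType) (e : R) (K : nat) : 0 < e -> 1 / e < K%:R -> (1 <= K)%N.
Proof.
move=> he hK; have : (0 : R) < K%:R by apply: le_lt_trans hK; rewrite divr_ge0 // ltW.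
by rewrite ltr0n.
Qed.

Lemma partA (R : realType) (d : nat -> nat)
  (hdo : littleo (fun n => (d n)%:R : R) (fun n => Num.sqrt (n%:R : R))) :
  littleo (fun n => (d n + qq n ^ 3)%:R : R) (fun n => Num.sqrt (n%:R : R)).
Proof.
move=> eps he.
have he2 : 0 < eps / 2 by rewrite divr_gt0.
case: (hdo _ he2) => N1 hN1.
set K := Num.Def.archi_bound (1 / (eps / 2)).
have hK : 1 / (eps / 2) < K%:R by apply: archi_boundP; rewrite divr_ge0 // ltW.
exists (maxn N1 (K ^ 8)) => n; rewrite geq_max => /andP[h1 h2].
have hq : (K <= qq n)%N := qqge h2.
have hqe := Lq he2 hK hq.
have := hN1 n h1; rewrite !ger0_norm ?sqrtr_ge0 // => hd.
rewrite natrD.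
have := L1 he2 hqe (qq8 n) => hq3.
rewrite [X in _ <= X * _](splitr eps) mulrDl.
exact: lerD.
Qed.

Lemma partB (R : realType) (d : nat -> nat)
  (hdo : littleo (fun n => (d n)%:R : R) (fun n => Num.sqrt (n%:R : R))) :
  littleo (fun n => (d n + qq n ^ 7 + 1)%:R : R) (fun n => (n%:R : R)).
Proof.
move=> eps he.
have he3 : 0 < eps / 3 by rewrite divr_gt0.
case: (hdo _ he3) => N1 hN1.
set K := Num.Def.archi_bound (1 / (eps / 3)).
have hK : 1 / (eps / 3) < K%:R by apply: archi_boundP; rewrite divr_ge0 // ltW.
exists (maxn N1 (K ^ 8)) => n; rewrite geq_max => /andP[h1 h2].
have hq : (K <= qq n)%N := qqge h2.
have hqe := Lq he3 hK hq.
have hK1 := Kpos he3 hK.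
have hn1 : (1 <= n)%N by apply: leq_trans h2; rewrite expn_gt0 hK1.
have := hN1 n h1; rewrite !ger0_norm ?sqrtr_ge0 // => hd.
have he3' : 0 <= eps / 3 by apply: ltW.
have hd' : (d n)%:R <= eps / 3 * n%:R.
  by apply: le_trans hd _; rewrite ler_wpM2l ?L3.
have hq7 := L2 he3 hqe (qq8 n).
have hqn : (qq n <= n)%N.
  apply: leq_trans (qq8 n); case: (qq n) => // k.
  by rewrite -{1}(expn1 k.+1) leq_pexp2l.
have h1' : 1 <= eps / 3 * n%:R.
  by apply: le_trans hqe _; rewrite mulrC ler_wpM2l ?ler_nat.
rewrite !natrD.
have -> : eps * n%:R = eps / 3 * n%:R + eps / 3 * n%:R + eps / 3 * n%:R.
  by rewrite -!mulrDl; congr (_ * _); field.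
by apply: lerD => //; apply: lerD.
Qed.

Lemma partC (R : realType) (m d : nat -> nat) (N0 : nat)
  (hm : forall n : nat, (N0 <= n)%N -> exists s : 'S_n, #[s]%g = m n)
  (hdvd : forall n : nat, (N0 <= n)%N -> (d n %| m n)%N)
  (hd3 : forall n : nat, (N0 <= n)%N -> (3 <= d n)%N) :
  tends_to (fun n => prop_good n (m n) ((d n + qq n ^ 3)%:R : R) ((d n + qq n ^ 7 + 1)%:R)) 1.
Proof.
move=> eps he.
set C := (2 ^ 8 + 2 ^ 8 * 2 ^ 8)%N.
have hCe : 0 < eps / C%:R by rewrite divr_gt0 // ltr0n /C addn_gt0 expn_gt0.
set K := Num.Def.archi_bound (1 / (eps / C%:R)).
have hK : 1 / (eps / C%:R) < K%:R by apply: archi_boundP; rewrite divr_ge0 // ltW.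
exists (maxn N0 (K ^ 8)) => n; rewrite geq_max => /andP[h0 h2].
have hq : (K <= qq n)%N := qqge h2.
have hqe := Lq hCe hK hq.
have hK1 := Kpos hCe hK.
have hq1 : (1 <= qq n)%N := leq_trans hK1 hq.
have hk := key (hd3 n h0) (hdvd n h0) hq1.
set O := [set s : 'S_n | #[s]%g == m n] in hk *.
set G := [set s : 'S_n | _ && _ && _] in hk.
have eG : [set s : 'S_n | (#[s]%g == m n) && ((nfix s)%:R <= ((d n + qq n ^ 3)%:R : R))
     && ((ntwocycles s)%:R <= ((d n + qq n ^ 7 + 1)%:R : R))] = G.
  by apply/setP => s; rewrite !inE !ler_nat.
rewrite /prop_good eG -/O.
have hGO : (#|G| <= #|O|)%N.
  by apply: subset_leq_card; apply/subsetP => s; rewrite !inE => /andP[/andP[-> _] _].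
have hO : (0 < #|O|)%N.
  by case: (hm n h0) => s hs; apply/card_gt0P; exists s; rewrite inE hs.
have hO' : (0 : R) < #|O|%:R by rewrite ltr0n.
have -> : #|G|%:R / #|O|%:R - 1 = - ((#|O| - #|G|)%:R / (#|O|%:R : R)).
  rewrite natrB //; field; exact: lt0r_neq0.
rewrite normrN ger0_norm ?divr_ge0 // ler_pdivrMr //.
have hk' : (#|O| - #|G|)%:R * (qq n)%:R <= C%:R * (#|O|%:R : R).
  by rewrite -!natrM ler_nat.
have hq0 : (0 : R) < (qq n)%:R by rewrite ltr0n.
rewrite -(ler_pM2r hq0); apply: le_trans hk' _.
have : 1 <= (qq n)%:R * (eps / C%:R) := hqe.
have hC0 : (0 : R) < C%:R by rewrite ltr0n /C addn_gt0 expn_gt0.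
move=> h.
have hc : C%:R <= eps * (qq n)%:R.
  have := ler_wpM2l (ltW hC0) h; rewrite mulr1.
  have -> : C%:R * ((qq n)%:R * (eps / C%:R)) = eps * (qq n)%:R.
    by field; exact: lt0r_neq0.
  by [].
by rewrite mulrAC ler_wpM2r // ltW.
Qed.

Lemma main_thm (R : realType) (m d : nat -> nat)
  (N0 : nat)
  (hm : forall n : nat, (N0 <= n)%N -> exists s : 'S_n, #[s]%g = m n)
  (hdvd : forall n : nat, (N0 <= n)%N -> (d n %| m n)%N)
  (hd3 : forall n : nat, (N0 <= n)%N -> (3 <= d n)%N)
  (hdo : littleo (fun n => (d n)%:R : R) (fun n => Num.sqrt (n%:R : R))) :
  exists a b : nat -> R,
    littleo a (fun n => Num.sqrt (n%:R : R)) /\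
    littleo b (fun n => (n%:R : R)) /\
    tends_to (fun n => prop_good n (m n) (a n) (b n)) 1.
Proof.
exists (fun n => (d n + qq n ^ 3)%:R), (fun n => (d n + qq n ^ 7 + 1)%:R).
split; [exact: partA | split; [exact: partB | exact: partC hm hdvd hd3]].
Qed.



Unset Implicit Arguments.
Theorem lemma5p7 (R : realType) (m d : nat -> nat)
  (N0 : nat)
  (hm : forall n : nat, (N0 <= n)%N -> exists s : 'S_n, #[s]%g = m n)
  (hdvd : forall n : nat, (N0 <= n)%N -> (d n %| m n)%N)
  (hd3 : forall n : nat, (N0 <= n)%N -> (3 <= d n)%N)
  (hdo : littleo (fun n => (d n)%:R : R) (fun n => Num.sqrt (n%:R : R))) :
  exists a b : nat -> R,
    littleo a (fun n => Num.sqrt (n%:R : R)) /\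
    littleo b (fun n => (n%:R : R)) /\
    tends_to (fun n => prop_good n (m n) (a n) (b n)) 1.
Proof. exact: (@main_thm R m d N0 hm hdvd hd3 hdo). Qed.
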